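(* Let $q$ be a prime power, $k,b,t$ positive integers and $f:\mathbb{F}_q^k\to\mathrm{Im}(f)$ a function with image $\mathrm{Im}(f)=\{f_1,\ldots,f_E\}$. Then \[ r_b^f(k,t)\le N_b\big(\boldsymbol{B}_f^{(2)}(t,f_1,\ldots,f_E)\big). \]
   Context: For $\boldsymbol{z}=(z_0,\ldots,z_{n-1})\in\mathbb{F}_q^n$, the $b$-symbol distance $d_b(\boldsymbol{z},\boldsymbol{w})$ is the number of $i\in\{0,\ldots,n-1\}$ with $(z_i,\ldots,z_{i+b-1})\neq(w_i,\ldots,w_{i+b-1})$ (indices mod $n$). A systematic encoding $\mathrm{Enc}(\boldsymbol{x})=(\boldsymbol{x},p(\boldsymbol{x}))\in\mathbb{F}_q^{k+r}$ is a function-correcting $b$-symbol code for $f$ if $d_b(\mathrm{Enc}(\boldsymbol{x}_1),\mathrm{Enc}(\boldsymbol{x}_2))\ge 2t+1$ whenever $f(\boldsymbol{x}_1)\ne f(\boldsymbol{x}_2)$; $r_b^f(k,t)$ is the smallest $r$ for which one exists. For an $M\times M$ nonnegative integer matrix $\boldsymbol{B}$, $N_b(\boldsymbol{B})$ is the smallest $r$ such that there exist $\boldsymbol{p}_1,\ldots,\boldsymbol{p}_M\in\mathbb{F}_q^r$ (in some ordering) with $d_b(\boldsymbol{p}_i,\boldsymbol{p}_j)\ge[\boldsymbol{B}]_{ij}$ for all $i,j$. The $b$-symbol distance between function values is $d_b^f(f_i,f_j)=\min\{d_b(\boldsymbol{x}_1,\boldsymbol{x}_2):\boldsymbol{x}_1,\boldsymbol{x}_2\in\mathbb{F}_q^k,\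 f(\boldsymbol{x}_1)=f_i,\ f(\boldsymbol{x}_2)=f_j\}$. The $E\times E$ matrix $\boldsymbol{B}_f^{(2)}(t,f_1,\ldots,f_E)$ has entries $\max\{2t+b-d_b^f(f_i,f_j),0\}$ for $i\ne j$ and $0$ on the diagonal. *)

(* Defs.v *)
From HB Require Import structures.
From mathcomp Require Import all_boot all_order all_algebra.
Set Implicit Arguments. Unset Strict Implicit. Unset Printing Implicit Defensive.

Definition cshift (n : nat) (i : 'I_n) (l : nat) : 'I_n :=
  Ordinal (ltn_pmod (i + l) (leq_ltn_trans (leq0n i) (ltn_ord i))).

Definition db (F : finFieldType) (b n : nat) (z w : 'rV[F]_n) : nat :=
  #|[set i : 'I_n | [exists l : 'I_b, z ord0 (cshift i l) != w ord0 (cshift i l)]]|.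

(* Systematic encoding x |-> (x, p x) is a function-correcting b-symbol code for f. *)
Definition is_FCbSC (F : finFieldType) (Y : eqType) (k b t r : nat)
  (f : 'rV[F]_k -> Y) (p : 'rV[F]_k -> 'rV[F]_r) : Prop :=
  forall x1 x2 : 'rV[F]_k, f x1 != f x2 ->
    (2 * t + 1 <= db b (row_mx x1 (p x1)) (row_mx x2 (p x2)))%N.

Definition rb_feasible (F : finFieldType) (Y : eqType) (k b t : nat)
  (f : 'rV[F]_k -> Y) (r : nat) : Prop :=
  exists p : 'rV[F]_k -> 'rV[F]_r, is_FCbSC b t f p.

Definition Nb_feasible (F : finFieldType) (M b : nat) (B : 'M[nat]_M) (r : nat) : Prop :=
  exists p : 'I_M -> 'rV[F]_r, forall i j : 'I_M, (B i j <= db b (p i) (p j))%N.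

Definition is_least (P : nat -> Prop) (n : nat) : Prop :=
  P n /\ forall m, P m -> (n <= m)%N.

(* d_b^f(a, c) = min { d_b(x1,x2) : f x1 = a, f x2 = c }.  The default value k of
   the iterated minn is harmless: d_b on F^k is always <= k and, for a, c in the
   image of f, the ranges are nonempty. *)
Definition dbf (F : finFieldType) (Y : eqType) (k b : nat) (f : 'rV[F]_k -> Y)
  (a c : Y) : nat :=
  \big[minn/k]_(x1 : 'rV[F]_k | f x1 == a) \big[minn/k]_(x2 : 'rV[F]_k | f x2 == c)
     db b x1 x2.

(* B_f^(2)(t, f_1, ..., f_E): entries max(2t + b - d_b^f(f_i,f_j), 0) off the
   diagonal (truncated nat subtraction), 0 on the diagonal. *)
Definition Bf2 (F : finFieldType) (Y : eqType) (k b t E : nat) (f : 'rV[F]_k -> Y)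
  (fs : 'I_E -> Y) : 'M[nat]_E :=
  \matrix_(i < E, j < E) (if i == j then 0 else (2 * t + b) - dbf b f (fs i) (fs j))%N.

(* Main.v *)
Require Import Defs.
From HB Require Import structures.
From mathcomp Require Import all_boot all_order all_algebra.
From mathcomp Require Import zify.
From Stdlib Require Import Classical.

Set Implicit Arguments. Unset Strict Implicit. Unset Printing Implicit Defensive.

Definition win (m b : nat) (u : nat -> bool) (i : nat) : bool :=
  has (fun l => u ((i + l) %% m)) (iota 0 b).
Definition W m b u := count (win m b u) (iota 0 m).
Definition T m b u i := ~~ win m b u i && u ((i + b) %% m).
Definition catu (k : nat) (ux up : nat -> bool) (j : nat) :=
  if j < k then ux j else up (j - k).

Lemma catuL k ux up j : j < k -> catu k ux up j = ux j.
Proof. by rewrite /catu => ->. Qed.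
Lemma catuR k ux up j : catu k ux up (k + j) = up j.
Proof. by rewrite /catu ltnNge leq_addr /= addKn. Qed.

Lemma modn_sub1 a m : m <= a -> a < m + m -> a %% m = a - m.
Proof. move=> h1 h2. rewrite -{1}(subnK h1) modnDr modn_small //; lia. Qed.

Lemma count_or (A : Type) (a c : pred A) s :
  count (fun i => a i || c i) s = count a s + count (fun i => ~~ a i && c i) s.
Proof. elim: s => //= x s ->; case: (a x); case: (c x) => /=; lia. Qed.

Lemma split_b m b (P : pred nat) s :
  count P s = count (fun i => (i + b < m) && P i) s + count (fun i => ~~ (i + b < m) && P i) s.
Proof. elim: s => //= x s ->; case: (x + b < m); case: (P x) => /=; lia. Qed.

Lemma W_S m b u : W m b.+1 u = W m b u + count (T m b u) (iota 0 m).
Proof.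
rewrite /W /T -count_or; apply: eq_count => i.
by rewrite /win -addn1 iotaD has_cat /= orbF add0n.
Qed.

Lemma W0 m u : W m 0 u = 0.
Proof. by rewrite /W /win /=; elim: (iota 0 m). Qed.

Lemma W_ext m b u u' : u =1 u' -> W m b u = W m b u'.
Proof. by move=> E; apply: eq_count => i; apply: eq_has => l; rewrite /= E. Qed.

Lemma count_le1 (A : eqType) (a : pred A) s : uniq s ->
  (forall x y, x \in s -> y \in s -> a x -> a y -> x = y) -> count a s <= 1.
Proof.
elim: s => //= x s IH /andP[xs us] H.
case ax: (a x) => /=.
- suff -> : count a s = 0 by [].
  apply/eqP; rewrite -leqn0 leqNgt -has_count; apply/hasPn => y ys; apply/negP => ay.
  have := H x y; rewrite !in_cons eqxx ys orbT => /(_ isT isT ax ay) E.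
  by move: xs; rewrite E ys.
- rewrite add0n; apply: IH => // y z ys zs; apply: H; by rewrite in_cons ?ys ?zs orbT.
Qed.

Lemma T_elim m b u i : T m b u i ->
  (forall l, l < b -> u ((i + l) %% m) = false) /\ u ((i + b) %% m).
Proof.
case/andP=> /hasPn H ->; split => // l hl.
by apply/negbTE; apply: H; rewrite mem_iota add0n.
Qed.

Lemma T_intro m b u i : (forall l, l < b -> u ((i + l) %% m) = false) ->
  u ((i + b) %% m) -> T m b u i.
Proof.
move=> H hu; rewrite /T hu andbT; apply/hasPn => l; rewrite mem_iota add0n => /andP[_ hl].
by rewrite H.
Qed.

Lemma wrap_aux m b (u : nat -> bool) x y : x < m -> y < m -> ~~ (x + b < m) -> x < y ->
  u ((x + b) %% m) -> T m b u y -> False.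
Proof.
move=> xm ym xw xy ux /T_elim [H _].
have := H (x + b - y) ltac:(lia).
by rewrite (_ : y + (x + b - y) = x + b) ?ux //; lia.
Qed.

Lemma wrap_le1 m b u :
  count (fun i => ~~ (i + b < m) && T m b u i) (iota 0 m) <= 1.
Proof.
apply: count_le1; first exact: iota_uniq.
move=> x y; rewrite !mem_iota !add0n => /andP[_ xm] /andP[_ ym].
case/andP=> xw Tx; case/andP=> yw Ty.
have [ux _] := (T_elim Tx). have [uy _] := (T_elim Ty).
case: (ltngtP x y) => // h.
- by case: (wrap_aux xm ym xw h (proj2 (T_elim Tx)) Ty).
- by case: (wrap_aux ym xm yw h (proj2 (T_elim Ty)) Tx).
Qed.

Lemma Dsplit k r b (u : nat -> bool) :
  count (T (k + r) b u) (iota 0 (k + r)) =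
  count (T (k + r) b u) (iota 0 k) + count (fun j => T (k + r) b u (k + j)) (iota 0 r).
Proof.
rewrite iotaD add0n count_cat.
have -> : iota k r = map (addn k) (iota 0 r) by rewrite -iotaDl addn0.
by rewrite count_map.
Qed.

Lemma nw_x k r b ux up :
  count (fun i => (i + b < k) && T k b ux i) (iota 0 k) =
  count (fun i => (i + b < k) && T (k + r) b (catu k ux up) i) (iota 0 k).
Proof.
apply: eq_in_count => i _ /=; case h: (i + b < k) => //=.
rewrite /T /win; congr (~~ _ && _).
- apply: eq_in_has => l; rewrite mem_iota add0n => /andP[_ hl] /=.
  rewrite (@modn_small (i + l) k); last lia.
  rewrite (@modn_small (i + l) (k + r)); last lia.
  rewrite catuL //; lia.
- rewrite (@modn_small (i + b) k); last lia.
  rewrite (@modn_small (i + b) (k + r)); last lia.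
  rewrite catuL //; lia.
Qed.

Lemma nw_p k r b ux up :
  count (fun j => (j + b < r) && T r b up j) (iota 0 r) =
  count (fun j => (j + b < r) && T (k + r) b (catu k ux up) (k + j)) (iota 0 r).
Proof.
apply: eq_in_count => j _ /=; case h: (j + b < r) => //=.
rewrite /T /win; congr (~~ _ && _).
- apply: eq_in_has => l; rewrite mem_iota add0n => /andP[_ hl] /=.
  rewrite (@modn_small (j + l) r); last lia.
  rewrite -addnA (@modn_small (k + (j + l)) (k + r)); last lia.
  by rewrite catuR.
- rewrite (@modn_small (j + b) r); last lia.
  rewrite -addnA (@modn_small (k + (j + b)) (k + r)); last lia.
  by rewrite catuR.
Qed.

Lemma b_lt m b (u : nat -> bool) i : 0 < m -> T m b u i -> b < m.
Proof.
move=> m0 /T_elim [H ht]; rewrite ltnNge; apply/negP => bm.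
have := H (b - m) ltac:(lia).
by rewrite (_ : (i + (b - m)) %% m = (i + b) %% m) ?ht // -(modnDr (i + (b - m))) ; congr (_ %% _); lia.
Qed.

Lemma both_wrap k r b ux up i j :
  i < k -> j < r -> ~~ (i + b < k) -> T k b ux i -> ~~ (j + b < r) -> T r b up j ->
  has (fun i => ~~ (i + b < k) && T (k + r) b (catu k ux up) i) (iota 0 k) ||
  has (fun j => ~~ (j + b < r) && T (k + r) b (catu k ux up) (k + j)) (iota 0 r).
Proof.
move=> ik jr iw Ti jw Tj.
have bk := b_lt (leq_ltn_trans (leq0n i) ik) Ti.
have br := b_lt (leq_ltn_trans (leq0n j) jr) Tj.
case: (T_elim Ti) => hx hxt; case: (T_elim Tj) => hp hpt.
rewrite modn_sub1 in hxt; [|lia|lia].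
rewrite modn_sub1 in hpt; [|lia|lia].
set c := catu k ux up.
case: (leqP (j + b - r) (i + b - k)) => cmp.
-
  have Tc : T (k + r) b c (i + r).
    apply: T_intro => [l hl|].
    + case: (ltnP (i + r + l) (k + r)) => h1.
      * rewrite modn_small //. case: (ltnP (i + r + l) k) => h2.
        - rewrite /c catuL //.
          have E : i + r + l = (i + (r + l)) %% k by rewrite addnA modn_small.
          rewrite E hx //; lia.
        - rewrite /c -(subnKC h2) catuR.
          have E : i + r + l - k = (j + (i + r + l - k - j)) %% r.
            rewrite modn_small; lia.
          rewrite E hp //; lia.
      * rewrite modn_sub1; [|lia|lia].
        rewrite /c catuL; last lia.
        have E : i + r + l - (k + r) = (i + l) %% k by rewrite modn_sub1; lia.
        rewrite E hx //.
    + rewrite modn_sub1; [|lia|lia].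
      rewrite /c catuL; last lia.
      by rewrite (_ : i + r + b - (k + r) = i + b - k) //; lia.
  case: (ltnP (i + r) k) => h.
  + apply/orP; left; apply/hasP; exists (i + r); first by rewrite mem_iota; lia.
    rewrite Tc andbT; lia.
  + apply/orP; right; apply/hasP; exists (i + r - k); first by rewrite mem_iota; lia.
    rewrite subnKC // Tc andbT; lia.
-
  set cand := k + (j + b - r) - b.
  have Tc : T (k + r) b c cand.
    apply: T_intro => [l hl|].
    + rewrite modn_small; last lia.
      case: (ltnP (cand + l) k) => h2.
      * rewrite /c catuL //.
        have E : cand + l = (i + (cand + l - i)) %% k by rewrite modn_small; lia.
        rewrite E hx //; lia.
      * rewrite /c -(subnKC h2) catuR.
        have E : cand + l - k = (j + (cand + l - k + r - j)) %% r.
          rewrite modn_sub1; lia.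
        rewrite E hp //; lia.
    + rewrite modn_small; last lia.
      rewrite /c (_ : cand + b = k + (j + b - r)); last lia.
      by rewrite catuR.
  apply/orP; left; apply/hasP; exists cand; first by rewrite mem_iota; lia.
  rewrite Tc andbT; lia.
Qed.

Lemma key k r b ux up : 0 < k ->
  count (T k b ux) (iota 0 k) + count (T r b up) (iota 0 r) <=
  count (T (k + r) b (catu k ux up)) (iota 0 (k + r)) + (0 < b).
Proof.
move=> k0; rewrite Dsplit.
rewrite (split_b k b (T k b ux)) (split_b r b (T r b up)).
rewrite (split_b k b (T (k + r) b (catu k ux up))).
rewrite (split_b r b (fun j => T (k + r) b (catu k ux up) (k + j))) /=.
rewrite -(nw_x k r b ux up) -(nw_p k r b ux up).
have hx := wrap_le1 k b ux. have hp := wrap_le1 r b up.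
case Ex: (has (fun i => ~~ (i + b < k) && T k b ux i) (iota 0 k));
case Ep: (has (fun j => ~~ (j + b < r) && T r b up j) (iota 0 r)).
- case/hasP: Ex => i; rewrite mem_iota add0n => /andP[_ ik] /andP[iw Ti].
  case/hasP: Ep => j; rewrite mem_iota add0n => /andP[_ jr] /andP[jw Tj].
  have b0 : 0 < b by lia.
  case/orP: (both_wrap ik jr iw Ti jw Tj); rewrite has_count => h; lia.
- have b0 : 0 < b.
    by case/hasP: Ex => i; rewrite mem_iota add0n => /andP[_ ik] /andP[iw _]; lia.
  move: Ep; rewrite has_count => /negbT; rewrite -leqNgt leqn0 => /eqP ->; lia.
- have b0 : 0 < b.
    by case/hasP: Ep => i; rewrite mem_iota add0n => /andP[_ ik] /andP[iw _]; lia.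
  move: Ex; rewrite has_count => /negbT; rewrite -leqNgt leqn0 => /eqP ->; lia.
- move: Ep; rewrite has_count => /negbT; rewrite -leqNgt leqn0 => /eqP ->.
  move: Ex; rewrite has_count => /negbT; rewrite -leqNgt leqn0 => /eqP ->; lia.
Qed.

Lemma W_cat k r b ux up : 0 < k ->
  W k b ux + W r b up <= W (k + r) b (catu k ux up) + b.-1.
Proof.
move=> k0; elim: b => [|b IH]; first by rewrite !W0.
rewrite !W_S; have := key r b ux up k0; lia.
Qed.

Definition dif (F : finFieldType) m (z w : 'rV[F]_m) (j : nat) : bool :=
  match (insub j : option 'I_m) with Some o => z ord0 o != w ord0 o | None => false end.

Lemma difE (F : finFieldType) m (z w : 'rV[F]_m) (o : 'I_m) :
  dif z w o = (z ord0 o != w ord0 o).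
Proof. by rewrite /dif valK. Qed.

Lemma card_count m (Q : nat -> bool) : #|[set i : 'I_m | Q i]| = count Q (iota 0 m).
Proof. rewrite cardsE cardE /enum_mem size_filter -enumT -val_enum_ord count_map.
by apply: eq_count => i. Qed.

Lemma db_W (F : finFieldType) b m (z w : 'rV[F]_m) : db b z w = W m b (dif z w).
Proof.
rewrite /db /W -card_count; apply: eq_card => i; rewrite !inE /win.
apply/existsP/hasP => [[l hl]|[l]].
- exists (val l); first by rewrite mem_iota ltn_ord.
  by rewrite -difE in hl.
- rewrite mem_iota add0n => /andP[_ hl] H; exists (Ordinal hl).
  by rewrite -difE.
Qed.

Lemma dif_row (F : finFieldType) k r (x1 x2 : 'rV[F]_k) (p1 p2 : 'rV[F]_r) j :
  dif (row_mx x1 p1) (row_mx x2 p2) j = catu k (dif x1 x2) (dif p1 p2) j.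
Proof.
rewrite {1}/dif; case: insubP => [o _ <- | hj].
- case: (splitP o) => [o1 e | o2 e].
  + have -> : o = lshift r o1 by apply: val_inj.
    by rewrite !row_mxEl /= catuL ?ltn_ord // difE.
  + have -> : o = rshift k o2 by apply: val_inj.
    by rewrite !row_mxEr /= catuR difE.
- rewrite /catu ifF; last by apply/negbTE; lia.
  by rewrite /dif insubF //; apply/negbTE; lia.
Qed.

Lemma bigmin_le (T : finType) (P : pred T) (F : T -> nat) d x0 :
  P x0 -> \big[minn/d]_(x | P x) F x <= F x0.
Proof.
move=> Px0; have : x0 \in index_enum T by rewrite mem_index_enum.
rewrite unlock.
elim: (index_enum T) => //= y s IH; rewrite in_cons.
case/orP=> [/eqP<-|/IH H]; first by rewrite Px0 geq_minl.
by case: (P y) => //; rewrite geq_min H orbT.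
Qed.

Lemma least_exists (P : nat -> Prop) : forall n, P n -> exists R, is_least P R /\ R <= n.
Proof.
elim/ltn_ind => n IH Pn.
case: (classic (exists m, m < n /\ P m)) => [[m [lt Pm]]|H].
- case: (IH m lt Pm) => R [hR le]; exists R; split => //; exact: leq_trans le (ltnW lt).
- exists n; split => //; split => // m Pm; rewrite leqNgt; apply/negP => lt; apply: H; by exists m.
Qed.

Theorem mainTheorem3 (F : finFieldType) (Y : eqType) (k b t E : nat)
  (hk : (0 < k)%N) (hb : (0 < b)%N) (ht : (0 < t)%N)
  (f : 'rV[F]_k -> Y) (fs : 'I_E -> Y)
  (fs_inj : injective fs)
  (fs_im : forall y : Y, (exists x : 'rV[F]_k, f x = y) <-> (exists i : 'I_E, fs i = y))
  (N : nat) (hN : is_least (Nb_feasible F b (Bf2 b t f fs)) N) :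
  exists R : nat, is_least (rb_feasible b t f) R /\ (R <= N)%N.
Proof.
case: hN => [[p hp] _].
suff feas : rb_feasible b t f N by exact: least_exists feas.
pose idx x := [pick i | fs i == f x].
exists (fun x => if idx x is Some i then p i else 0%R).
move=> x1 x2 hneq.
have gi x : exists i, idx x = Some i /\ fs i = f x.
  rewrite /idx; case: pickP => [i /eqP e | hn]; first by exists i.
  case: (proj1 (fs_im (f x)) (ex_intro _ x erefl)) => i e.
  by move: (hn i); rewrite e eqxx.
case: (gi x1) => i1 [-> e1]; case: (gi x2) => i2 [-> e2].
have hB := hp i1 i2.
have ne : i1 != i2 by apply/eqP => Ei; move: hneq; rewrite -e1 -e2 Ei eqxx.
rewrite /Bf2 mxE (negbTE ne) e1 e2 in hB.
have hd : dbf b f (f x1) (f x2) <= db b x1 x2.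
  rewrite /dbf; apply: leq_trans; first exact: (@bigmin_le _ (fun x => f x == f x1) _ k x1 (eqxx _)).
  exact: (@bigmin_le _ (fun x => f x == f x2) _ k x2 (eqxx _)).
rewrite db_W (W_ext _ _ (dif_row x1 x2 (p i1) (p i2))).
have := @W_cat k N b (dif x1 x2) (dif (p i1) (p i2)) hk.
rewrite -!db_W; lia.
Qed.
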